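(* Let $K$ and $L$ be $n$-element finite sets, let $U$ be the real $n^2$-dimensional manifold of unitary matrices $(u_{kl})_{k\in K,l\in L}$, and let $U_0\subset U$ be the open subset of unitary matrices all of whose entries are nonzero. Let $B$ be the real affine space of real matrices $(p_{kl})_{k\in K,l\in L}$ with $\sum_{k}p_{kl}=1$ for all $l$ and $\sum_lp_{kl}=1$ for all $k$, and let $\mu:U\to B$, $\mu((u_{kl}))=(|u_{kl}|^2)$. Then for every $u\in U_0$, the (real) dimension of the kernel of the tangent map $\mu_{*u}:T_uU\to T_{\mu(u)}B$ equals the multiplicity of $1$ in the spectrum of the Berezin transform $I_u$.
   Context: For a finite set $J$, $F(J)$ denotes the space of complex-valued functions on $J$; $M=K\times L$. For $u\in U_0$ the Berezin transform $I_u:F(M)\to F(M)$ is the complex linear operator $(I_uf)_{kl}=\sum_{k'\in K,l'\in L}\frac{u_{kl'}u_{k'l}}{u_{kl}u_{k'l'}}f_{k'l'}|u_{k'l'}|^2$ (equivalently $I_u=C_u^{-1}D_u$, where $C_uf$, $D_uf$ are the operators on $F(K)$ with matrices $\sum_l u_{kl}f_{kl}\bar u_{k'l}$ and $\sum_l u_{kl}f_{k'l}\bar u_{k'l}$); $I_u$ is unitary, hence diagonalizable, and the multiplicity of $1$ is the complex dimension of its $1$-eigenspace. *)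

(* Defs.v *)
(* R : realType (the real numbers), C := R[i] (complex numbers,
   from mathcomp-real-closed), matrices indexed by 'I_n (K = L = 'I_n). *)
From HB Require Import structures.
From mathcomp Require Import all_boot all_order all_algebra.
From mathcomp Require Import reals.
From mathcomp Require Import complex.
Set Implicit Arguments. Unset Strict Implicit. Unset Printing Implicit Defensive.
Import Order.TTheory GRing.Theory Num.Theory.
Local Open Scope ring_scope.

Section Defs.
Variable R : realType.
Local Notation C := R[i].
Variable n : nat.

Definition ctrmx (A : 'M[C]_n) : 'M[C]_n := (map_mx (@conjc R) A)^T.

Definition unitary (u : 'M[C]_n) : Prop := ctrmx u *m u = 1%:M.

Definition unitary0 (u : 'M[C]_n) : Prop :=
  unitary u /\ forall k l, u k l != 0.

(* T_u U, as the kernel of the derivative at u of the defining equation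
   u^* u = 1:  A \in T_u U  <->  u^* A + A^* u = 0. *)
Definition tangent_eq (u A : 'M[C]_n) : 'M[C]_n :=
  ctrmx u *m A + ctrmx A *m u.

(* tangent map of mu : (u_kl) |-> (|u_kl|^2 = u_kl * conj u_kl), at u, applied
   to the tangent vector A (values are real, stored in C). *)
Definition dmu (u A : 'M[C]_n) : 'M[C]_n :=
  \matrix_(k, l) (A k l * conjc (u k l) + u k l * conjc (A k l)).

Definition realify (A : 'M[C]_n) : 'rV[R]_(n * n + n * n) :=
  row_mx (mxvec (map_mx (@complex.Re R) A)) (mxvec (map_mx (@complex.Im R) A)).
Definition complexify (v : 'rV[R]_(n * n + n * n)) : 'M[C]_n :=
  \matrix_(k, l) Complex (vec_mx (lsubmx v) k l) (vec_mx (rsubmx v) k l).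

(* real-linear map whose kernel is ker (mu_{*u} : T_u U -> T_{mu u} B) *)
Definition kerdmu_map (u : 'M[C]_n) (v : 'rV[R]_(n * n + n * n)) :=
  row_mx (realify (tangent_eq u (complexify v))) (realify (dmu u (complexify v))).

Definition dim_ker_dmu (u : 'M[C]_n) : nat :=
  \rank (kermx (lin1_mx (kerdmu_map u))).

(* Berezin transform I_u on F(M) = 'M[C]_n;  |z|^2 written as z * conj z *)
Definition berezin (u f : 'M[C]_n) : 'M[C]_n :=
  \matrix_(k, l) \sum_(k' < n) \sum_(l' < n)
     (u k l' * u k' l / (u k l * u k' l')) * f k' l' * (u k' l' * conjc (u k' l')).

Definition mult1_berezin (u : 'M[C]_n) : nat :=
  \rank (eigenspace (lin_mx (berezin u)) 1).

End Defs.

(* Main.v *)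
Require Import Defs.
From HB Require Import structures.
From mathcomp Require Import all_boot all_order all_algebra.
From mathcomp Require Import reals complex.
Import Order.TTheory GRing.Theory Num.Theory.
Local Open Scope ring_scope.

Lemma lin1P {F : fieldType} {m p} {f : 'rV[F]_m -> 'rV[F]_p} :
  (forall a x y, f (a *: x + y) = a *: f x + f y) -> forall x, x *m lin1_mx f = f x.
Proof.
move=> hf x.
pose fL : {linear _ -> _} := HB.pack f (GRing.isLinear.Build _ _ _ _ f hf).
exact: (mul_rV_lin1 fL).
Qed.

Lemma linP {F : fieldType} {m1 n1 m2 n2} {f : 'M[F]_(m1,n1) -> 'M[F]_(m2,n2)} :
  (forall a x y, f (a *: x + y) = a *: f x + f y) -> forall x, x *m lin_mx f = mxvec (f (vec_mx x)).
Proof.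
move=> hf x.
pose fL : {linear _ -> _} := HB.pack f (GRing.isLinear.Build _ _ _ _ f hf).
exact: (mul_rV_lin fL).
Qed.

Lemma ker_rank_eq (F : fieldType) m p q (A : 'M[F]_(m,p)) (B : 'M[F]_(m,q)) :
  (forall x : 'rV_m, (x *m A == 0) = (x *m B == 0)) -> \rank (kermx A) = \rank (kermx B).
Proof.
move=> H; rewrite !mxrank_ker.
suff ->: \rank A = \rank B by [].
Abort.

Lemma ker_sub (F : fieldType) m p q (A : 'M[F]_(m,p)) (B : 'M[F]_(m,q)) :
  (forall x : 'rV_m, x *m A = 0 -> x *m B = 0) -> (kermx A <= kermx B)%MS.
Proof.
move=> H; apply/sub_kermxP; apply/row_matrixP => i.
by rewrite row_mul row0; apply: H; rewrite -row_mul mulmx_ker row0.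
Qed.

Lemma ker_rank_eq (F : fieldType) m p q (A : 'M[F]_(m,p)) (B : 'M[F]_(m,q)) :
  (forall x : 'rV_m, x *m A = 0 <-> x *m B = 0) -> \rank (kermx A) = \rank (kermx B).
Proof.
move=> H; apply/eqP; rewrite eqn_leq !mxrankS // ker_sub // => x; rewrite H //.
Qed.

Lemma ker_rank_le (F : fieldType) m1 p1 m2 p2 (A : 'M[F]_(m1,p1)) (B : 'M[F]_(m2,p2))
  (P : 'M[F]_(m2,m1)) (P' : 'M[F]_(m1,m2)) :
  (forall x : 'rV_m2, x *m B = 0 -> x *m P *m A = 0) -> (forall x : 'rV_m2, x *m B = 0 -> x *m P *m P' = x) ->
  (\rank (kermx B) <= \rank (kermx A))%N.
Proof.
move=> H1 H2.
have e: kermx B *m P *m P' = kermx B.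
  by apply/row_matrixP => i; rewrite 2!row_mul; apply: H2; rewrite -row_mul mulmx_ker row0.
rewrite -{1}e; apply: leq_trans (mxrankM_maxl _ _) _; apply: mxrankS.
apply/sub_kermxP; apply/row_matrixP => i; rewrite row0 2!row_mul.
by apply: H1; rewrite -row_mul mulmx_ker row0.
Qed.

Lemma ker_rank_map (F F' : fieldType) (f : {rmorphism F -> F'}) m p (A : 'M[F]_(m,p)) :
  \rank (kermx (map_mx f A)) = \rank (kermx A).
Proof. by rewrite !mxrank_ker mxrank_map. Qed.

From mathcomp Require Import ring.

Section Main.
Variable R : realType.
Local Notation C := R[i].
Variable n : nat.
Variable u : 'M[C]_n.
Hypothesis hu : unitary u.
Hypothesis hnz : forall k l, u k l != 0.

Lemma cjM (x y : C) : conjc (x * y) = conjc x * conjc y. Proof. exact: rmorphM. Qed.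
Lemma cjD (x y : C) : conjc (x + y) = conjc x + conjc y. Proof. exact: rmorphD. Qed.
Lemma cjB (x y : C) : conjc (x - y) = conjc x - conjc y. Proof. exact: rmorphB. Qed.
Lemma cjN (x : C) : conjc (- x) = - conjc x. Proof. exact: rmorphN. Qed.
Lemma cjK (x : C) : conjc (conjc x) = x. Proof. by case: x => a b; rewrite /conjc opprK. Qed.
Lemma cjR (r : R) : conjc (r%:C)%C = (r%:C)%C. Proof. by rewrite /conjc /= oppr0. Qed.
Lemma cjsum (I : finType) (f : I -> C) : conjc (\sum_i f i) = \sum_i conjc (f i).
Proof. exact: rmorph_sum. Qed.

Definition Hd (F : 'M[C]_n) := \matrix_(k, l) (u k l * F k l).
Definition Tm (F : 'M[C]_n) := \matrix_(l, k) (conjc (u k l) * F k l).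
Definition Smx F := ctrmx u *m Hd F.
Definition Rmx F := Tm F *m u.
Definition toC (g : 'M[R]_n) : 'M[C]_n := map_mx (real_complex R) g.

Lemma berezinE (F : 'M[C]_n) (k l : 'I_n) : berezin u F k l = (u *m Tm F *m u) k l / u k l.
Proof.
rewrite !mxE mulr_suml; apply: eq_bigr => k' _; rewrite !mxE !mulr_suml.
apply: eq_bigr => l' _; rewrite !mxE.
have h1 := hnz k l; have h2 := hnz k' l'.
move: (u k l) (u k' l') (conjc _) h1 h2 => a b c h1 h2; field; exact/andP.
Qed.

Lemma fixedE F : berezin u F = F <-> Rmx F = Smx F.
Proof.
have uu : u *m ctrmx u = 1%:M by apply: mulmx1C.
split => [H|H].
- have e : u *m Tm F *m u = Hd F.
    apply/matrixP => k l; rewrite [Hd F k l]mxE; have := congr1 (fun M : 'M[C]_n => M k l) H.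
    rewrite berezinE /= => <-; rewrite mulrC divfK //.
  by rewrite /Rmx /Smx -e !mulmxA hu mul1mx.
- have e : u *m Tm F *m u = Hd F.
    by rewrite -mulmxA /Rmx in H *; rewrite H mulmxA uu mul1mx.
  by apply/matrixP => k l; rewrite berezinE e mxE mulrC mulKf.
Qed.

Lemma Hd_lin F1 F2 c : Hd (F1 + c *: F2) = Hd F1 + c *: Hd F2.
Proof. by apply/matrixP => k l; rewrite !mxE; ring. Qed.
Lemma Tm_lin F1 F2 c : Tm (F1 + c *: F2) = Tm F1 + c *: Tm F2.
Proof. by apply/matrixP => k l; rewrite !mxE; ring. Qed.
Lemma Smx_lin F1 F2 c : Smx (F1 + c *: F2) = Smx F1 + c *: Smx F2.
Proof. by rewrite /Smx Hd_lin mulmxDr scalemxAr. Qed.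
Lemma Rmx_lin F1 F2 c : Rmx (F1 + c *: F2) = Rmx F1 + c *: Rmx F2.
Proof. by rewrite /Rmx Tm_lin mulmxDl scalemxAl. Qed.

Lemma conjS (g : 'M[R]_n) (l l' : 'I_n) : conjc (Smx (toC g) l l') = Rmx (toC g) l' l.
Proof.
rewrite !mxE cjsum; apply: eq_bigr => k _; rewrite !mxE !cjM cjK cjR.
by ring.
Qed.
Lemma conjR (g : 'M[R]_n) (l l' : 'I_n) : conjc (Rmx (toC g) l l') = Smx (toC g) l' l.
Proof. by rewrite -conjS cjK. Qed.


Lemma ci : conjc ('i%C : C) = - 'i%C.
Proof. by rewrite /conjc; apply/eqP; rewrite eq_complex /= oppr0 !eqxx. Qed.

Lemma key (x y : C) : x + 'i%C * y = 0 -> - conjc x + 'i%C * (- conjc y) = 0 -> y = 0.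
Proof.
move=> h1 h2; have h3 := congr1 conjc h2.
rewrite cjD cjN cjK cjM cjN cjK ci /conjc /= oppr0 in h3.
have e : 'i%C * y * 2%:R = (x + 'i%C * y) + (- x + - 'i%C * - y) by ring.
rewrite h1 h3 addr0 in e.
move/eqP: e; rewrite !mulf_eq0 pnatr_eq0 orbF => /orP [|/eqP //].
by rewrite eq_complex /= oner_eq0 andbF.
Qed.

Lemma mxBE (A B : 'M[C]_n) i j : (A - B) i j = A i j - B i j.
Proof. by rewrite !mxE. Qed.
Lemma mxDE (A B : 'M[C]_n) i j : (A + B) i j = A i j + B i j.
Proof. by rewrite !mxE. Qed.
Lemma mxZE (c : C) (A : 'M[C]_n) i j : (c *: A) i j = c * A i j.
Proof. by rewrite !mxE. Qed.
Lemma mx0E i j : (0 : 'M[C]_n) i j = 0.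
Proof. by rewrite !mxE. Qed.

Lemma skewX (g : 'M[R]_n) (l l' : 'I_n) :
  (Smx (toC g) - Rmx (toC g)) l' l = - conjc ((Smx (toC g) - Rmx (toC g)) l l').
Proof. by rewrite !mxBE cjB conjS conjR opprB. Qed.

Lemma split_fixed (a b : 'M[R]_n) :
  Rmx (toC a + 'i%C *: toC b) = Smx (toC a + 'i%C *: toC b) <->
  Rmx (toC a) = Smx (toC a) /\ Rmx (toC b) = Smx (toC b).
Proof.
set X := Smx (toC a) - Rmx (toC a); set Y := Smx (toC b) - Rmx (toC b).
have E : Smx (toC a + 'i%C *: toC b) - Rmx (toC a + 'i%C *: toC b) = X + 'i%C *: Y.
  by rewrite Smx_lin Rmx_lin /X /Y scalerBr opprD addrACA.
have eqv : forall M N : 'M[C]_n, M = N <-> N - M = 0.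
  by move=> M N; split => [->|/eqP]; [rewrite subrr | rewrite subr_eq0 => /eqP].
rewrite (eqv (Rmx (toC a + _))) (eqv (Rmx (toC a))) (eqv (Rmx (toC b))) E -/X -/Y; split => [H|[-> ->]]; last by rewrite scaler0 addr0.
have HY : Y = 0.
  apply/matrixP => l l'; rewrite mx0E; apply: (@key (X l l')).
    by have := congr1 (fun M : 'M[C]_n => M l l') H; rewrite mxDE mxZE mx0E.
  have := congr1 (fun M : 'M[C]_n => M l' l) H; rewrite mxDE mxZE mx0E.
  by rewrite /X /Y (skewX a l l') (skewX b l l').
by move: H; rewrite HY scaler0 addr0 => ->.
Qed.

Lemma ll (F : pzRingType) m1 n1 p1 (X Y : 'M[F]_(m1,n1+p1)) (b : F) : lsubmx (b *: X + Y) = b *: lsubmx X + lsubmx Y.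
Proof. by rewrite linearP. Qed.
Lemma rr (F : pzRingType) m1 n1 p1 (X Y : 'M[F]_(m1,n1+p1)) (b : F) : rsubmx (b *: X + Y) = b *: rsubmx X + rsubmx Y.
Proof. by rewrite linearP. Qed.
Lemma vv (F : pzRingType) m1 n1 (X Y : 'rV[F]_(m1*n1)) (b : F) : vec_mx (b *: X + Y) = b *: vec_mx X + vec_mx Y.
Proof. by rewrite linearP. Qed.

Lemma mapE' (T T' : Type) (f : T -> T') m p (A : 'M[T]_(m,p)) i j : map_mx f A i j = f (A i j).
Proof. by rewrite mxE. Qed.

Lemma ReL (a : R) (x y : C) : complex.Re ((a%:C)%C * x + y) = a * complex.Re x + complex.Re y.
Proof. by case: x => x1 x2; case: y => y1 y2; rewrite -complexr0; simpc. Qed.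
Lemma ImL (a : R) (x y : C) : complex.Im ((a%:C)%C * x + y) = a * complex.Im x + complex.Im y.
Proof. by case: x => x1 x2; case: y => y1 y2; rewrite -complexr0; simpc. Qed.

Lemma realify_lin (a : R) (X Y : 'M[C]_n) :
  realify ((a%:C)%C *: X + Y) = a *: realify X + realify Y.
Proof.
have mv : forall (X Y : 'M[R]_n) (b : R), b *: mxvec X + mxvec Y = mxvec (b *: X + Y).
  by move=> *; rewrite linearP.
rewrite /realify scale_row_mx add_row_mx !mv; congr row_mx; congr mxvec;
  by apply/matrixP => k l; rewrite !mxE ?ReL ?ImL.
Qed.

Lemma complexify_lin (a : R) (v w : 'rV[R]_(n * n + n * n)) :
  complexify (a *: v + w) = (a%:C)%C *: complexify v + complexify w.
Proof.
apply/matrixP => k l; rewrite [LHS]mxE ll rr !vv !mxE -complexr0; simpc.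
by [].
Qed.

Lemma realifyK (A : 'M[C]_n) : complexify (realify A) = A.
Proof.
apply/matrixP => k l; rewrite mxE /realify row_mxKl row_mxKr !mxvecK !mxE.
by case: (A k l).
Qed.

Lemma complexifyK (v : 'rV[R]_(n * n + n * n)) : realify (complexify v) = v.
Proof.
rewrite /realify -[v in RHS]hsubmxK; congr row_mx.
  by rewrite -[lsubmx v]vec_mxK; congr mxvec; apply/matrixP => k l; rewrite !mxE.
by rewrite -[rsubmx v]vec_mxK; congr mxvec; apply/matrixP => k l; rewrite !mxE.
Qed.

Lemma realify0 : realify (0 : 'M[C]_n) = 0.
Proof.
rewrite /realify.
have -> : map_mx (@complex.Re R) (0 : 'M[C]_n) = 0 by apply/matrixP => i j; rewrite !mxE.
have -> : map_mx (@complex.Im R) (0 : 'M[C]_n) = 0 by apply/matrixP => i j; rewrite !mxE.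
by rewrite linear0 row_mx0.
Qed.

Lemma realify_eq0 (A : 'M[C]_n) : realify A = 0 -> A = 0.
Proof.
move=> h; rewrite -(realifyK A) h; apply/matrixP => i j; rewrite !mxE.
by [].
Qed.

Definition phi (x : 'rV[R]_(n * n)) : 'rV[R]_(n * n + n * n) :=
  realify (\matrix_(k, l) ('i%C * u k l * (vec_mx x k l)%:C%C)).

Definition psi (v : 'rV[R]_(n * n + n * n)) : 'rV[R]_(n * n) :=
  mxvec (\matrix_(k, l) complex.Im (complexify v k l / u k l)).

Lemma phi_lin a x y : phi (a *: x + y) = a *: phi x + phi y.
Proof.
rewrite /phi -realify_lin; congr realify; apply/matrixP => k l.
rewrite !mxE rmorphD rmorphM /=; ring.
Qed.

Lemma psi_lin a x y : psi (a *: x + y) = a *: psi x + psi y.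
Proof.
have mv : forall (X Y : 'M[R]_n) (b : R), b *: mxvec X + mxvec Y = mxvec (b *: X + Y).
  by move=> *; rewrite linearP.
rewrite /psi mv; congr mxvec; apply/matrixP => k l.
by rewrite [LHS]mxE complexify_lin !mxE mulrDl -mulrA ImL.
Qed.

Lemma psi_phi x : psi (phi x) = x.
Proof.
rewrite /psi /phi realifyK -[RHS]vec_mxK; congr mxvec; apply/matrixP => k l.
rewrite !mxE; set r := x 0 _.
rewrite (_ : _ / u k l = 'i%C * r%:C%C); last by field.
by rewrite -complexr0; simpc.
Qed.

Lemma pureim (w : C) : w + conjc w = 0 -> w = 'i%C * (complex.Im w)%:C%C.
Proof.
case: w => p q; rewrite /conjc => /eqP; rewrite eq_complex /= => /andP [h _].
have p0 : p = 0 by apply/eqP; move: h; rewrite -mulr2n mulrn_eq0.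
by rewrite p0 -complexr0; simpc.
Qed.

Lemma psiE v k l : vec_mx (psi v) k l = complex.Im (complexify v k l / u k l).
Proof. by rewrite /psi mxvecK mxE. Qed.

Lemma phi_psi y : dmu u (complexify y) = 0 -> phi (psi y) = y.
Proof.
move=> h; rewrite /phi -[RHS]complexifyK; congr realify.
apply/matrixP => k l; rewrite [LHS]mxE psiE.
set A := complexify y k l.
have hk := hnz k l.
have e : A / u k l + conjc (A / u k l) = 0.
  have := congr1 (fun M : 'M[C]_n => M k l) h; rewrite mxE mx0E -/A => h'.
  have hc : conjc (u k l) != 0 by rewrite conjc_eq0.
  apply: (mulIf (mulf_neq0 hk hc)); rewrite mul0r -h'.
  rewrite cjM conjc_inv; field; exact/andP.
by rewrite -mulrA (mulrCA 'i%C) -(pureim _ e) mulrC divfK.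
Qed.


Lemma tangent_lin (c : C) (A B : 'M[C]_n) : conjc c = c ->
  tangent_eq u (c *: A + B) = c *: tangent_eq u A + tangent_eq u B.
Proof.
move=> hc.
have ct : ctrmx (c *: A + B) = c *: ctrmx A + ctrmx B.
  by apply/matrixP => i j; rewrite !mxE cjD cjM hc.
by rewrite /tangent_eq ct mulmxDr mulmxDl -scalemxAr -scalemxAl scalerDr addrACA.
Qed.

Lemma dmu_lin (c : C) (A B : 'M[C]_n) : conjc c = c ->
  dmu u (c *: A + B) = c *: dmu u A + dmu u B.
Proof. by move=> hc; apply/matrixP => i j; rewrite !mxE cjD cjM hc; ring. Qed.

Lemma kerdmu_lin a (v w : 'rV[R]_(n * n + n * n)) :
  kerdmu_map u (a *: v + w) = a *: kerdmu_map u v + kerdmu_map u w.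
Proof.
rewrite /kerdmu_map complexify_lin tangent_lin ?cjR // dmu_lin ?cjR //.
by rewrite !realify_lin [in RHS]scale_row_mx [in RHS]add_row_mx.
Qed.

Definition Pm := lin1_mx phi.
Definition Pm' := lin1_mx psi.
Definition A1 := lin1_mx (kerdmu_map u).
Definition Qm := Pm *m A1.

Lemma A1E v : v *m A1 = kerdmu_map u v.
Proof. exact: (lin1P kerdmu_lin). Qed.
Lemma PmE v : v *m Pm = phi v.
Proof. exact: (lin1P phi_lin). Qed.
Lemma Pm'E v : v *m Pm' = psi v.
Proof. exact: (lin1P psi_lin). Qed.

Lemma kerdmu0 v : kerdmu_map u v = 0 ->
  tangent_eq u (complexify v) = 0 /\ dmu u (complexify v) = 0.
Proof.
move/eqP; rewrite /kerdmu_map row_mx_eq0 => /andP [/eqP h1 /eqP h2].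
by split; apply: realify_eq0.
Qed.

Lemma phiC x : complexify (phi x) = 'i%C *: Hd (toC (vec_mx x)).
Proof. by rewrite /phi realifyK; apply/matrixP => k l; rewrite !mxE; ring. Qed.

Lemma dmu_phi x : dmu u (complexify (phi x)) = 0.
Proof. by rewrite phiC; apply/matrixP => k l; rewrite !mxE !cjM ci cjR; ring. Qed.

Lemma tangent_phi x : tangent_eq u (complexify (phi x)) =
  'i%C *: (Smx (toC (vec_mx x)) - Rmx (toC (vec_mx x))).
Proof.
rewrite phiC /tangent_eq.
have ct : ctrmx ('i%C *: Hd (toC (vec_mx x))) = - 'i%C *: Tm (toC (vec_mx x)).
  by apply/matrixP => i j; rewrite !mxE !cjM ci cjR; ring.
by rewrite ct -scalemxAr -scalemxAl /Smx /Rmx scaleNr scalerBr.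
Qed.

Lemma i_neq0 : ('i%C : C) != 0.
Proof. by rewrite eq_complex /= oner_eq0 andbF. Qed.

Lemma realQ x : x *m Qm = 0 <-> Rmx (toC (vec_mx x)) = Smx (toC (vec_mx x)).
Proof.
rewrite /Qm mulmxA PmE A1E /kerdmu_map tangent_phi dmu_phi realify0.
split.
- move/eqP; rewrite row_mx_eq0 => /andP [/eqP h _].
  move/eqP: (realify_eq0 _ h); rewrite scaler_eq0 (negbTE i_neq0) /= subr_eq0.
  by move/eqP.
- by move=> ->; rewrite subrr scaler0 realify0 row_mx0.
Qed.

Lemma berezin_lin (c : C) (F1 F2 : 'M[C]_n) :
  berezin u (c *: F1 + F2) = c *: berezin u F1 + berezin u F2.
Proof.
apply/matrixP => k l; rewrite !mxE mulr_sumr -big_split; apply: eq_bigr => k' _.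
rewrite mulr_sumr -big_split; apply: eq_bigr => l' _; rewrite !mxE /=; ring.
Qed.

Lemma Gm (x : 'rV[C]_(n * n)) :
  x *m (lin_mx (berezin u) - 1%:M) = mxvec (berezin u (vec_mx x)) - x.
Proof. by rewrite mulmxBr mulmx1 (linP berezin_lin). Qed.

Lemma decompF (F : 'M[C]_n) :
  F = toC (map_mx (@complex.Re R) F) + 'i%C *: toC (map_mx (@complex.Im R) F).
Proof. by apply/matrixP => k l; rewrite !mxE; case: (F k l) => p q; rewrite -!complexr0; simpc. Qed.

Lemma cplx0 (p q : R) : (p%:C + 'i * q%:C = 0)%C <-> p = 0 /\ q = 0.
Proof.
split => [|[-> ->]]; last by rewrite -!complexr0; simpc.
by rewrite -!complexr0; simpc => /eqP; rewrite eq_complex /= => /andP [/eqP -> /eqP ->].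
Qed.

Lemma cmulQ p (x : 'rV[C]_(n * n)) (Q : 'M[R]_(n * n, p)) :
  x *m map_mx (real_complex R) Q = 0 <->
  map_mx (@complex.Re R) x *m Q = 0 /\ map_mx (@complex.Im R) x *m Q = 0.
Proof.
have -> : x *m map_mx (real_complex R) Q =
  map_mx (real_complex R) (map_mx (@complex.Re R) x *m Q) +
  'i%C *: map_mx (real_complex R) (map_mx (@complex.Im R) x *m Q).
  rewrite !map_mxM scalemxAl -mulmxDl; congr (_ *m _).
  by apply/matrixP => i j; rewrite !mxE /=; case: (x i j) => a b /=; simpc.
split.
- move=> h; split; apply/rowP => j; have := congr1 (fun M : 'rV[C]_p => M 0 j) h;
    rewrite !mxE => /cplx0 [] //.
- by case=> -> ->; rewrite !map_mx0 scaler0 addr0.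
Qed.

Lemma main_eq : dim_ker_dmu u = mult1_berezin u.
Proof.
have e1 : dim_ker_dmu u = \rank (kermx Qm).
  rewrite /dim_ker_dmu -/A1; apply/eqP; rewrite eqn_leq; apply/andP; split.
  - apply: (@ker_rank_le _ _ _ _ _ _ _ Pm' Pm) => y hy.
      have hk : kerdmu_map u y = 0 by rewrite -A1E.
      have hpp : y *m Pm' *m Pm = y by rewrite Pm'E PmE phi_psi // (kerdmu0 _ hk).2.
      by rewrite /Qm mulmxA hpp.
    have hk : kerdmu_map u y = 0 by rewrite -A1E.
    by rewrite Pm'E PmE phi_psi // (kerdmu0 _ hk).2.
  - apply: (@ker_rank_le _ _ _ _ _ _ _ Pm Pm') => x hx; first by rewrite -mulmxA.
    by rewrite PmE Pm'E psi_phi.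
have e2 : mult1_berezin u = \rank (kermx (map_mx (real_complex R) Qm)).
  rewrite /mult1_berezin /eigenspace; apply: ker_rank_eq => x; rewrite Gm.
  have -> : (mxvec (berezin u (vec_mx x)) - x = 0) <-> berezin u (vec_mx x) = vec_mx x.
    split => [/eqP|->]; last by rewrite vec_mxK subrr.
    by rewrite subr_eq0 => /eqP h; rewrite -(mxvecK (berezin u (vec_mx x))) h.
  rewrite fixedE (decompF (vec_mx x)) split_fixed cmulQ !map_vec_mx -!realQ.
  by [].
by rewrite e1 e2 ker_rank_map.
Qed.

End Main.

Theorem theorem5p1 (R : realType) (n : nat) (u : 'M[R[i]]_n) :
  unitary0 u -> dim_ker_dmu u = mult1_berezin u.
Proof. by case=> hu hnz; exact: (@main_eq R n u hu hnz). Qed.
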